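(* Let $\kappa>0$ be a cardinal and let $T_\kappa$ be a tournament with at most $\mathsf{exp}_{10}(\kappa)$ vertices such that every $\kappa$-edge-colouring of $T_\kappa$ contains a quasi-monochromatic directed cycle of length three; put $\lambda_\kappa=|V(T_\kappa)|$. Let $T$ be a $\kappa$-edge-coloured tournament that has no king-serf duo by monochromatic paths of size at most $\lambda_\kappa$. Then $T$ has a subtournament isomorphic to $T_\kappa$ all of whose edges are forbidding edges of $T$.
   Context: A tournament is a directed graph obtained by orienting every edge of a (possibly infinite) complete undirected graph. For a cardinal $\kappa$, $\mathsf{exp}_0(\kappa)=\kappa$, $\mathsf{exp}_{k+1}(\kappa)=2^{\mathsf{exp}_k(\kappa)}$. A $\kappa$-edge-colouring of $T$ is a function $c:A(T)\to\kappa$. A monochromatic path is a directed path (no repeated vertices) whose edges all have the same colour. A directed cycle is quasi-monochromatic if all but at most one of its edges have the same colour. A king-serf duo by monochromatic paths in $T$ is a pair of disjoint sets $K,S\subseteq V(T)$ such that every vertex $v$ has a monochromatic path of length at most two from a vertex of $K$ to $v$ or from $v$ to a vertex of $S$; its size is $|K|+|S|$. An edge $uv$ of $T$ is forbidding if there is no monochromatic path of length at most two from $v$ to $u$ in $T$. *)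

(* Defs.v *)
(* exp_k(X): exp_0 X = X, exp_{k+1} X = power set of exp_k X  (2^{exp_k}). *)
Fixpoint expT (n : nat) (X : Type) : Type :=
  match n with
  | O => X
  | S m => expT m X -> Prop
  end.

Definition card_le (A B : Type) : Prop :=
  exists f : A -> B, forall x y, f x = f y -> x = y.

Definition tournament {V : Type} (E : V -> V -> Prop) : Prop :=
  (forall u, ~ E u u) /\
  (forall u v, u <> v -> E u v \/ E v u) /\
  (forall u v, E u v -> ~ E v u).

(* An edge colouring with colours in K; only the values on arcs are relevant. *)
Definition colouring (V K : Type) := V -> V -> K.

Definition has_qm_triangle {V K : Type} (E : V -> V -> Prop) (c : colouring V K) : Prop :=
  exists a b d : V,
    a <> b /\ b <> d /\ a <> d /\
    E a b /\ E b d /\ E d a /\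
    (c a b = c b d \/ c b d = c d a \/ c a b = c d a).

Definition mono_path_le2 {V K : Type} (E : V -> V -> Prop) (c : colouring V K) (u v : V) : Prop :=
  u = v \/ E u v \/
  (exists w, u <> w /\ w <> v /\ u <> v /\ E u w /\ E w v /\ c u w = c w v).

Definition king_serf_duo {V K : Type} (E : V -> V -> Prop) (c : colouring V K)
  (Ks Ss : V -> Prop) : Prop :=
  (forall v, ~ (Ks v /\ Ss v)) /\
  (forall v, (exists k, Ks k /\ mono_path_le2 E c k v) \/
             (exists s, Ss s /\ mono_path_le2 E c v s)).

(* Its size |Ks| + |Ss| (= |Ks ∪ Ss| as they are disjoint) is at most |W|. *)
Definition duo_size_le {V : Type} (Ks Ss : V -> Prop) (W : Type) : Prop :=
  card_le {v : V | Ks v \/ Ss v} W.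

Definition forbidding {V K : Type} (E : V -> V -> Prop) (c : colouring V K) (u v : V) : Prop :=
  E u v /\ ~ mono_path_le2 E c v u.

(* Main.v *)
Require Import Defs.
From Stdlib Require Import Classical ClassicalEpsilon ProofIrrelevance.
From mathcomp Require Import all_boot.
From mathcomp Require Import boolp classical_sets.

Definition validp {V0 V : Type} (E0 : V0 -> V0 -> Prop) (E : V -> V -> Prop) {K : Type}
  (c : colouring V K) (g : V0 -> option V) : Prop :=
  forall x y v u, g x = Some v -> g y = Some u ->
    (v = u -> x = y) /\ (E0 x y <-> E v u) /\ (E0 x y -> forbidding E c v u).

Definition extp {V0 V : Type} (g h : V0 -> option V) : Prop :=
  forall x v, g x = Some v -> h x = Some v.

Theorem lemma5
  (K : Type) (k0 : K)                                  (* kappa > 0 *)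
  (V0 : Type) (E0 : V0 -> V0 -> Prop)                  (* T_kappa *)
  (HT0 : tournament E0)
  (Hsize0 : card_le V0 (expT 10 K))                    (* |V(T_kappa)| <= exp_10(kappa) *)
  (Hcol0 : forall c0 : colouring V0 K, has_qm_triangle E0 c0)
  (V : Type) (E : V -> V -> Prop) (HT : tournament E)  (* T *)
  (c : colouring V K)
  (Hno : ~ exists Ks Ss : V -> Prop,
           king_serf_duo E c Ks Ss /\ duo_size_le Ks Ss V0) :
  exists f : V0 -> V,
    (forall x y, f x = f y -> x = y) /\
    (forall x y, E0 x y <-> E (f x) (f y)) /\
    (forall x y, E0 x y -> forbidding E c (f x) (f y)).
Proof.
destruct HT0 as [Irr0 [Tot0 Asy0]].
destruct HT as [Irr [Tot Asy]].
pose T := {g : V0 -> option V | validp E0 E c g}.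
pose R := fun a b : T => `[< extp (proj1_sig a) (proj1_sig b) >].
assert (v0 : validp E0 E c (fun _ => None)).
{ intros x y v u H; discriminate H. }
assert (HZ : exists t, premaximal R t).
{ apply (@ZL_preorder T (exist _ _ v0) R).
  - intros t; apply/asboolP; intros x v H; exact H.
  - intros r s t H1 H2; apply/asboolP; move/asboolP: H1 => H1; move/asboolP: H2 => H2.
    intros x v H; auto.
  - intros A HA.
    pose h := fun x => match excluded_middle_informative
                 (exists v, exists a, A a /\ proj1_sig a x = Some v) with
              | left H => Some (proj1_sig (cid H))
              | right _ => None end.
    assert (Hh : forall x v, h x = Some v <-> exists a, A a /\ proj1_sig a x = Some v).
    { intros x v; unfold h.
      destruct excluded_middle_informative as [H|H].
      - destruct (cid H) as [v' [a [Aa Ha]]]; simpl.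
        split.
        + intros e; injection e as e; subst; eauto.
        + intros [b [Ab Hb]].
          destruct (HA a b Aa Ab) as [Hab|Hab]; move/asboolP: Hab => Hab.
          * rewrite (Hab _ _ Ha) in Hb; congruence.
          * rewrite (Hab _ _ Hb) in Ha; congruence.
      - split; [discriminate|]. intros Hx; exfalso; apply H; eauto. }
    assert (vh : validp E0 E c h).
    { intros x y v u Hx Hy.
      apply Hh in Hx; apply Hh in Hy.
      destruct Hx as [a [Aa Ha]]; destruct Hy as [b [Ab Hb]].
      destruct (HA a b Aa Ab) as [Hab|Hab]; move/asboolP: Hab => Hab.
      - apply (proj2_sig b); auto.
      - apply (proj2_sig a); auto. }
    exists (exist _ h vh); intros s As; apply/asboolP; intros x v H; simpl.
    apply Hh; eauto. }
destruct HZ as [[g vg] Hmax].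
assert (Htot : forall x, exists v, g x = Some v).
{ intros x; destruct (g x) as [v|] eqn:Hgx; [eauto|exfalso].
  pose A := fun v => exists y, g y = Some v /\ E0 x y.
  pose B := fun v => exists y, g y = Some v /\ E0 y x.
  assert (Hdis : forall v, ~ (A v /\ B v)).
  { intros v [[y1 [H1 E1]] [y2 [H2 E2]]].
    destruct (vg _ _ _ _ H1 H2) as [Hi _]. rewrite (Hi (erefl v)) in E1.
    exact (Asy0 _ _ E1 E2). }
  assert (Hsz : duo_size_le A B V0).
  { assert (Hw : forall p : {v : V | A v \/ B v}, exists y, g y = Some (proj1_sig p)).
    { intros [v pf]; simpl; destruct pf as [[y [Hy _]]|[y [Hy _]]]; eauto. }
    exists (fun p => proj1_sig (cid (Hw p))).
    intros p q e.
    destruct (cid (Hw p)) as [y1 H1].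
    destruct (cid (Hw q)) as [y2 H2].
    simpl in e; subst.
    rewrite H1 in H2; injection H2 as H2.
    destruct p, q; simpl in H2; subst.
    f_equal; apply proof_irrelevance. }
  assert (Hw : exists w, ~ (exists k, A k /\ mono_path_le2 E c k w) /\
                         ~ (exists s, B s /\ mono_path_le2 E c w s)).
  { apply NNPP; intros Hn; apply Hno; exists A, B; split; [|exact Hsz].
    split; [exact Hdis|]. intros w.
    apply NNPP; intros Hn2; apply Hn; exists w.
    split; intros H; apply Hn2; [left|right]; exact H. }
  destruct Hw as [w [HwA HwB]].
  assert (Hnr : forall y, g y <> Some w).
  { intros y Hy.
    assert (yx : y <> x) by (intros ->; congruence).
    destruct (Tot0 _ _ yx) as [H|H].
    - apply HwB; exists w; split; [exists y; auto|left; reflexivity].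
    - apply HwA; exists w; split; [exists y; auto|left; reflexivity]. }
  assert (HA' : forall y u, g y = Some u -> E0 x y -> E w u /\ ~ mono_path_le2 E c u w).
  { intros y u Hy Exy.
    assert (nm : ~ mono_path_le2 E c u w) by (intros m; apply HwA; exists u; split; [exists y; auto|exact m]).
    split; [|exact nm].
    assert (uw : u <> w) by (intros ->; exact (Hnr _ Hy)).
    destruct (Tot _ _ uw) as [H|H]; [exfalso; apply nm; right; left; exact H|exact H]. }
  assert (HB' : forall y u, g y = Some u -> E0 y x -> E u w /\ ~ mono_path_le2 E c w u).
  { intros y u Hy Exy.
    assert (nm : ~ mono_path_le2 E c w u) by (intros m; apply HwB; exists u; split; [exists y; auto|exact m]).
    split; [|exact nm].
    assert (uw : w <> u) by (intros ->; exact (Hnr _ Hy)).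
    destruct (Tot _ _ uw) as [H|H]; [exfalso; apply nm; right; left; exact H|exact H]. }
  pose g' := fun z => if excluded_middle_informative (z = x) then Some w else g z.
  assert (vg' : validp E0 E c g').
  { intros z1 z2 v u H1 H2; unfold g' in H1, H2; cbv beta in H1, H2.
    destruct (excluded_middle_informative (z1 = x)) as [e1|n1];
    destruct (excluded_middle_informative (z2 = x)) as [e2|n2]; cbn in H1, H2.
    - assert (v = w) by congruence; assert (u = w) by congruence; subst.
      split; [auto|split; [split; intros H; exfalso; [exact (Irr0 _ H)|exact (Irr _ H)]|intros H; exfalso; exact (Irr0 _ H)]].
    - assert (v = w) by congruence; subst v; subst z1.
      split; [intros ->; exfalso; exact (Hnr _ H2)|].
      split; [split|].
      + intros H; exact (proj1 (HA' _ _ H2 H)).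
      + intros H; destruct (Tot0 _ _ (not_eq_sym n2)) as [H'|H']; [exact H'|].
        exfalso; apply (proj2 (HB' _ _ H2 H')); right; left; exact H.
      + intros H; split; [exact (proj1 (HA' _ _ H2 H))|exact (proj2 (HA' _ _ H2 H))].
    - assert (u = w) by congruence; subst u; subst z2.
      split; [intros <-; exfalso; exact (Hnr _ H1)|].
      split; [split|].
      + intros H; exact (proj1 (HB' _ _ H1 H)).
      + intros H; destruct (Tot0 _ _ n1) as [H'|H']; [exact H'|].
        exfalso; apply (proj2 (HA' _ _ H1 H')); right; left; exact H.
      + intros H; split; [exact (proj1 (HB' _ _ H1 H))|exact (proj2 (HB' _ _ H1 H))].
    - apply vg; auto. }
  assert (Rg : R (exist _ g vg) (exist _ g' vg')).
  { apply/asboolP; intros z v Hz; simpl; unfold g'.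
    destruct (excluded_middle_informative (z = x)) as [e|n]; cbn; [subst; simpl in Hz; congruence|exact Hz]. }
  move/Hmax/asboolP: Rg => Rg.
  assert (Hx : g' x = Some w).
  { unfold g'; destruct (excluded_middle_informative (x = x)); cbn; [reflexivity|congruence]. }
  specialize (Rg x w Hx); simpl in Rg; congruence. }
exists (fun x => proj1_sig (cid (Htot x))).
assert (Hf : forall x, g x = Some (proj1_sig (cid (Htot x)))).
{ intros x; destruct (cid (Htot x)); auto. }
split; [|split].
- intros x y e; exact (proj1 (vg _ _ _ _ (Hf x) (Hf y)) e).
- intros x y; exact (proj1 (proj2 (vg _ _ _ _ (Hf x) (Hf y)))).
- intros x y; exact (proj2 (proj2 (vg _ _ _ _ (Hf x) (Hf y)))).
Qed.
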